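(* Let $t$ be a random permutation of $\{0,\dots,N-1\}$ with an arbitrary distribution that is not $\delta$ non-uniform, and let $S$ be a part of maximum size among those satisfying $\Pr[S\subseteq\mathrm{parts}(t)]>2^{\delta|S|}\,(N-|S|)!/N!$. Then for every part $S'$ distinct from $S$, $$\Pr[S'\subseteq\mathrm{parts}(t)\mid S\subseteq\mathrm{parts}(t)]\le2^{\delta|S'|}\frac{(N-|S|-|S'|)!}{(N-|S|)!}.$$
   Context: A part is a set $S=\{(x_i,y_i)\}_{i=1}^M$ such that some permutation $\pi$ of $\{0,\dots,N-1\}$ has $\pi(x_i)=y_i$ for all $i$; ''$S\subseteq\mathrm{parts}(t)$'' means $t(x_i)=y_i$ for all $i$. Parts $S,S'$ are distinct if they share no input and $S\cup S'$ is a part. A random permutation $t$ is $\delta$ non-uniform if $\Pr[S\subseteq\mathrm{parts}(t)]\le2^{\delta|S|}(N-|S|)!/N!$ for every part $S$ (the right-hand factor being the probability for a uniformly random permutation). *)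

(* Defs.v *)
From mathcomp Require Import all_boot all_order all_algebra all_fingroup.
From mathcomp Require Import reals exp.
Set Implicit Arguments. Unset Strict Implicit. Unset Printing Implicit Defensive.
Import Order.TTheory GRing.Theory Num.Theory.
Local Open Scope ring_scope.

Definition is_part (N : nat) (S : {set 'I_N * 'I_N}) : Prop :=
  exists pi : {perm 'I_N}, forall p, p \in S -> pi p.1 = p.2.

Definition in_parts (N : nat) (S : {set 'I_N * 'I_N}) (s : {perm 'I_N}) : bool :=
  [forall p in S, s p.1 == p.2].

Definition is_distr (R : realType) (N : nat) (P : {ffun {perm 'I_N} -> R}) : Prop :=
  (forall s, 0 <= P s) /\ \sum_s P s = 1.

Definition prob_parts (R : realType) (N : nat) (P : {ffun {perm 'I_N} -> R})
  (S : {set 'I_N * 'I_N}) : R :=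
  \sum_(s | in_parts S s) P s.

Definition prob_parts2 (R : realType) (N : nat) (P : {ffun {perm 'I_N} -> R})
  (S' S : {set 'I_N * 'I_N}) : R :=
  \sum_(s | in_parts S' s && in_parts S s) P s.

Definition cond_prob_parts (R : realType) (N : nat) (P : {ffun {perm 'I_N} -> R})
  (S' S : {set 'I_N * 'I_N}) : R :=
  prob_parts2 P S' S / prob_parts P S.

Definition nu_bound (R : realType) (N : nat) (delta : R) (S : {set 'I_N * 'I_N}) : R :=
  (2 `^ (delta * #|S|%:R)) * ((N - #|S|)`!)%:R / (N`!)%:R.

Definition nonuniform (R : realType) (N : nat) (delta : R)
  (P : {ffun {perm 'I_N} -> R}) : Prop :=
  forall S : {set 'I_N * 'I_N}, is_part S -> prob_parts P S <= nu_bound delta S.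

Definition distinct_parts (N : nat) (S S' : {set 'I_N * 'I_N}) : Prop :=
  (forall p q, p \in S -> q \in S' -> p.1 != q.1) /\ is_part (S :|: S').

(* Main.v *)
Require Import Defs.
From mathcomp Require Import all_boot all_order all_algebra all_fingroup.
From mathcomp Require Import reals exp.
From mathcomp Require Import ring.
Import Order.TTheory GRing.Theory Num.Theory.
Local Open Scope ring_scope.

Theorem mainTheorem8 (R : realType) (N : nat) (delta : R)
  (P : {ffun {perm 'I_N} -> R}) (S : {set 'I_N * 'I_N}) :
  is_distr P ->
  ~ nonuniform delta P ->
  is_part S ->
  nu_bound delta S < prob_parts P S ->
  (forall S2 : {set 'I_N * 'I_N}, is_part S2 ->
     nu_bound delta S2 < prob_parts P S2 -> (#|S2| <= #|S|)%N) ->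
  forall S' : {set 'I_N * 'I_N}, is_part S' -> distinct_parts S S' ->
    cond_prob_parts P S' S <=
    2 `^ (delta * #|S'|%:R) * ((N - #|S| - #|S'|)`!)%:R / ((N - #|S|)`!)%:R.
Proof.
move=> _ _ _ Hlt Hmax S' _ [Hdis HU].
have nuS0 : 0 < nu_bound delta S.
  by rewrite /nu_bound divr_gt0 ?mulr_gt0 ?powR_gt0 // ltr0n fact_gt0.
have pS0 : 0 < prob_parts P S by apply: lt_trans Hlt.
have E2 : prob_parts2 P S' S = prob_parts P (S :|: S').
  rewrite /prob_parts2 /prob_parts; apply: eq_bigl => s.
  apply/andP/forallP => [[/forallP H1 /forallP H2] p|H].
    apply/implyP; rewrite in_setU => /orP [pS|pS'].
      exact: (implyP (H2 p)).
    exact: (implyP (H1 p)).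
  split; apply/forallP => p; apply/implyP => hp; apply: (implyP (H p));
    by rewrite in_setU hp ?orbT.
have disj : [disjoint S & S'].
  apply/pred0P => p /=; apply/negbTE/negP => /andP [h1 h2].
  by move: (Hdis _ _ h1 h2); rewrite eqxx.
have cardU : #|S :|: S'| = (#|S| + #|S'|)%N.
  by rewrite cardsU (disjoint_setI0 disj) cards0 subn0.
have fpos : forall n, (0 : R) < (n`!)%:R by move=> n; rewrite ltr0n fact_gt0.
rewrite /cond_prob_parts E2.
have [S'0|S'n0] := eqVneq S' set0.
  rewrite S'0 setU0 cards0 subn0 mulr0 powRr0 mul1r divff ?divff //.
    by rewrite gt_eqF.
  by rewrite gt_eqF.
have Hle : prob_parts P (S :|: S') <= nu_bound delta (S :|: S').
  rewrite leNgt; apply/negP => H; move: (Hmax _ HU H).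
  rewrite cardU -{2}(addn0 #|S|) leq_add2l leqn0 cards_eq0.
  by move/eqP/eqP; rewrite (negbTE S'n0).
have nuU0 : 0 <= nu_bound delta (S :|: S').
  by rewrite /nu_bound divr_ge0 ?mulr_ge0 ?powR_ge0 ?ler0n.
apply: (le_trans (y := nu_bound delta (S :|: S') / prob_parts P S)).
  by rewrite ler_pM2r ?invr_gt0.
apply: (le_trans (y := nu_bound delta (S :|: S') / nu_bound delta S)).
  by rewrite ler_wpM2l // lef_pV2 ?posrE // ltW.
rewrite /nu_bound cardU natrD mulrDr powRD; last first.
  by apply/implyP => _; rewrite pnatr_eq0.
rewrite subnDA.
have h1 := fpos N. have h2 := fpos (N - #|S|)%N.
have h3 : (0:R) < 2 `^ (delta * #|S|%:R) by rewrite powR_gt0.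
move: h1 h2 h3; set a := 2 `^ _; set b := 2 `^ _; set c := _%:R; set d := _%:R; set e := _%:R => h1 h2 h3.
rewrite le_eqVlt; apply/orP; left; apply/eqP.
field; rewrite ?gt_eqF //=.
Qed.
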